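(* Consider the Rayleigh fading channel $y=hx+v$, $v\sim\mathcal{CN}(0,1)$, perfect CSI at transmitter and receiver, $|h|^2$ exponential with unit mean. Let $\mathcal{A}(\mathrm{SNR})\ge1$ be a PAPR depending on $\mathrm{SNR}$, and let $\lambda_0=\lambda_0(\mathrm{SNR})$ be the water-filling level defined by $\mathrm{SNR}=\mathbf{E}[[1/\lambda_0-1/|h|^2]^+]$. Suppose the peak constraint is effective, i.e. $\mathcal{A}(\mathrm{SNR})\,\mathrm{SNR}<1/\lambda_0$ for all small $\mathrm{SNR}$. Let $\lambda=\lambda(\mathrm{SNR})$, with $\lambda\,\mathcal{A}(\mathrm{SNR})\,\mathrm{SNR}<1$, be determined by $$\mathrm{SNR}=\mathbf{E}\left[\min\left\{\left[\frac1\lambda-\frac1{|h|^2}\right]^+,\ \mathcal{A}(\mathrm{SNR})\,\mathrm{SNR}\right\}\right].$$ Then (1) $\mathcal{A}(\mathrm{SNR})\,\mathrm{SNR}\to0$ as $\mathrm{SNR}\to0$; and (2) if moreover $\mathcal{A}(\mathrm{SNR})\to\infty$ as $\mathrm{SNR}\to0$, then $\lambda\to\infty$ as $\mathrm{SNR}\to0$.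
   Context: $[u]^+=\max\{0,u\}$. The water-filling allocation $[1/\lambda_0-1/|h|^2]^+$ is the optimal power allocation without a peak constraint; its peak power is $1/\lambda_0$, and $1/\lambda_0\to0$ as $\mathrm{SNR}\to0$. *)

(* Defs.v *)
From Stdlib Require Import Reals Lra.
Open Scope R_scope.

Definition posp (u : R) : R := Rmax 0 u.

(* Expect phi v : for G = |h|^2 ~ Exp(1) (density exp(-g) on [0,oo)),
   E[phi(G)] = v, as the improper Riemann integral
   lim_{b -> oo} int_0^b phi(g) exp(-g) dg = v. *)
Definition Expect (phi : R -> R) (v : R) : Prop :=
  forall eps : R, 0 < eps -> exists B : R, forall b : R, B <= b ->
    exists pr : Riemann_integrable (fun g => phi g * exp (- g)) 0 b,
      Rabs (RiemannInt pr - v) < eps.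

(* Main.v *)
Require Import Defs.
From Stdlib Require Import Reals Lra.
Open Scope R_scope.

Lemma int_lb (F : R -> R) a b l (pr : Riemann_integrable F a b) :
  a <= b -> (forall x, a < x < b -> l <= F x) -> l * (b - a) <= RiemannInt pr.
Proof.
  intros Hab H.
  rewrite <- (RiemannInt_P15 (RiemannInt_P14 a b l)).
  apply RiemannInt_P19; auto.
Qed.

Lemma int_split_lb (F : R -> R) a b K (pr : Riemann_integrable F 0 b) :
  0 <= a -> a + 1 <= b ->
  (forall x, 0 < x < b -> 0 <= F x) ->
  (forall x, a < x < a + 1 -> K <= F x) -> K <= RiemannInt pr.
Proof.
  intros Ha Hb H0 HK.
  assert (h1 : 0 <= a <= b) by lra.
  pose (pr1 := RiemannInt_P22 pr h1).
  pose (prR := RiemannInt_P23 pr h1).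
  assert (h2 : a <= a + 1 <= b) by lra.
  pose (pr2 := RiemannInt_P22 prR h2).
  pose (pr3 := RiemannInt_P23 prR h2).
  rewrite <- (RiemannInt_P26 pr1 prR pr).
  rewrite <- (RiemannInt_P26 pr2 pr3 prR).
  assert (I1 := int_lb F 0 a 0 pr1 Ha ltac:(intros; apply H0; lra)).
  assert (I2 := int_lb F a (a+1) K pr2 ltac:(lra) HK).
  assert (I3 := int_lb F (a+1) b 0 pr3 ltac:(lra) ltac:(intros; apply H0; lra)).
  lra.
Qed.

Lemma expect_lb (f : R -> R) v a c :
  0 <= a -> 0 < c -> (forall g, 0 < g -> 0 <= f g) ->
  (forall g, a < g < a + 1 -> c <= f g) -> Expect f v ->
  c * exp (-(a+1)) / 2 < v.
Proof.
  intros Ha Hc Hf Hc2 HE.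
  set (K := c * exp (-(a+1))).
  assert (HKp : 0 < K) by (unfold K; apply Rmult_lt_0_compat; auto; apply exp_pos).
  destruct (HE (K/2) ltac:(lra)) as [B HB].
  destruct (HB (Rmax B (a+1)) (Rmax_l _ _)) as [pr Hpr].
  assert (K <= RiemannInt pr).
  { apply (int_split_lb _ a); auto.
    - apply Rmax_r.
    - intros x Hx. apply Rmult_le_pos; [apply Hf; lra | left; apply exp_pos].
    - intros x Hx. unfold K. apply Rmult_le_compat; [lra| left; apply exp_pos | apply Hc2; lra |].
      destruct (Rle_lt_or_eq_dec _ _ (Rlt_le (-(a+1)) (-x) ltac:(lra))) as [h|h].
      + left; apply exp_increasing; auto.
      + rewrite h; lra. }
  apply Rabs_def2 in Hpr. lra.
Qed.

Lemma inv_small (eps g : R) : 0 < eps -> 2 / eps < g -> / g < eps / 2.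
Proof.
  intros He Hg.
  assert (0 < 2/eps) by (apply Rdiv_lt_0_compat; lra).
  replace (eps/2) with (/ (2/eps)) by (field; lra).
  apply Rinv_lt_contravar; [apply Rmult_lt_0_compat|]; lra.
Qed.

Lemma part1 (A lam0 : R -> R) (delta : R) :
  0 < delta ->
  (forall s, 0 < s < delta -> 1 <= A s /\ 0 < lam0 s /\
     Expect (fun g => posp (/ lam0 s - / g)) s /\ A s * s < / lam0 s) ->
  forall eps, 0 < eps -> exists d, 0 < d /\
     forall s, 0 < s < d -> Rabs (A s * s) < eps.
Proof.
  intros Hd H eps He.
  set (c := (eps/2) * exp (-(2/eps+1)) / 2).
  assert (Hc : 0 < c) by (unfold c; assert (0 < exp (-(2/eps+1))) by apply exp_pos; nra).
  exists (Rmin delta c). split; [apply Rmin_glb_lt; auto|].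
  intros s Hs.
  assert (Hs1 : s < delta) by (eapply Rlt_le_trans; [apply Hs| apply Rmin_l]).
  assert (Hs2 : s < c) by (eapply Rlt_le_trans; [apply Hs| apply Rmin_r]).
  destruct (H s ltac:(lra)) as (HA & Hl & HE & Hpk).
  rewrite Rabs_pos_eq by nra.
  destruct (Rlt_or_le (A s * s) eps) as [h|h]; auto.
  exfalso.
  assert (0 < 2/eps) by (apply Rdiv_lt_0_compat; lra).
  assert (Hlb := expect_lb (fun g => posp (/ lam0 s - / g)) s (2/eps) (eps/2) ltac:(lra) ltac:(lra)
     ltac:(intros; apply Rmax_l)
     ltac:(intros g Hg; unfold posp; eapply Rle_trans; [|apply Rmax_r];
           assert (/g < eps/2) by (apply inv_small; lra); lra) HE).
  unfold c in Hs2. lra.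
Qed.

Theorem lemma3 (A lam0 lam : R -> R) (delta : R) :
  0 < delta ->
  (* standing assumptions for all small SNR s in (0, delta) *)
  (forall s, 0 < s < delta ->
     1 <= A s /\
     (* water-filling level *)
     0 < lam0 s /\ Expect (fun g => posp (/ lam0 s - / g)) s /\
     (* peak constraint is effective *)
     A s * s < / lam0 s /\
     (* peak-constrained level *)
     0 < lam s /\ lam s * A s * s < 1 /\
     Expect (fun g => Rmin (posp (/ lam s - / g)) (A s * s)) s) ->
  (* (1) A(SNR) SNR -> 0 as SNR -> 0 *)
  (forall eps, 0 < eps -> exists d, 0 < d /\
     forall s, 0 < s < d -> Rabs (A s * s) < eps) /\
  (* (2) if A(SNR) -> oo then lambda -> oo *)
  ((forall M, exists d, 0 < d /\ forall s, 0 < s < d -> M < A s) ->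
   forall M, exists d, 0 < d /\ forall s, 0 < s < d -> M < lam s).


Proof.
  intros Hd H.
  assert (P1 := part1 A lam0 delta Hd
    ltac:(intros s Hs; destruct (H s Hs) as (a1&a2&a3&a4&_); auto)).
  split; [exact P1|].
  intros HA M.
  set (L := Rmax M 1).
  assert (HL1 : 1 <= L) by apply Rmax_r.
  assert (HLM : M <= L) by apply Rmax_l.
  destruct (P1 (/ (2 * L)) ltac:(apply Rinv_0_lt_compat; lra)) as [d1 [Hd1 Hd1']].
  destruct (HA (2 * exp (2 * L + 1))) as [d2 [Hd2 Hd2']].
  exists (Rmin delta (Rmin d1 d2)). split; [repeat apply Rmin_glb_lt; auto|].
  intros s Hs.
  assert (Hm := Rmin_l delta (Rmin d1 d2)).
  assert (Hm1 := Rmin_l d1 d2). assert (Hm2 := Rmin_r d1 d2).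
  assert (Hm3 := Rmin_r delta (Rmin d1 d2)).
  destruct (H s ltac:(lra)) as (HA1 & _ & _ & _ & Hlp & _ & HE).
  assert (HP := Hd1' s ltac:(lra)).
  assert (HAb := Hd2' s ltac:(lra)).
  rewrite Rabs_pos_eq in HP by nra.
  destruct (Rlt_or_le M (lam s)) as [h|h]; auto. exfalso.
  assert (Hpos : 0 < A s * s) by nra.
  assert (Hinv : / L <= / lam s) by (apply Rinv_le_contravar; lra).
  assert (Hlb := expect_lb (fun g => Rmin (posp (/ lam s - / g)) (A s * s)) s (2 * L) (A s * s) ltac:(lra) Hpos
     ltac:(intros g Hg; apply Rmin_glb; [apply Rmax_l | lra])
     ltac:(intros g Hg; apply Rmin_glb; [|lra]; unfold posp;
           eapply Rle_trans; [|apply Rmax_r];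
           assert (/ g < / (2 * L)) by (apply Rinv_lt_contravar; nra);
           assert (/ L = 2 * / (2 * L)) by (field; lra); lra) HE).
  assert (Hex : exp (2 * L + 1) * exp (- (2 * L + 1)) = 1).
  { rewrite <- exp_plus. replace (2 * L + 1 + - (2 * L + 1)) with 0 by ring. apply exp_0. }
  assert (0 < exp (2 * L + 1)) by apply exp_pos.
  assert (0 < exp (-(2 * L + 1))) by apply exp_pos.
  assert (A s * exp (- (2 * L + 1)) < 2).
  { apply (Rmult_lt_reg_r s); [lra|]. nra. }
  nra.
Qed.
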